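(* Let $n$ be a positive integer and $k$ an integer with $0\le k\le n$. Then $$e_k\left(\left\{\csc^2\left(\tfrac{(2j-1)\pi}{4n}\right) : j=1,\dots,n\right\}\right) = \frac{n\,(n+k-1)!\,4^k}{(n-k)!\,(2k)!}.$$
   Context: $e_k(\alpha_1,\dots,\alpha_n)$ denotes the degree-$k$ elementary symmetric function of $\alpha_1,\dots,\alpha_n$ (with $e_0=1$). *)

(* Defs.v *)
From HB Require Import structures.
From mathcomp Require Import all_boot all_order all_algebra.
From mathcomp Require Import all_classical all_reals all_analysis.
Set Implicit Arguments. Unset Strict Implicit. Unset Printing Implicit Defensive.
Import Order.TTheory GRing.Theory Num.Theory.
Local Open Scope ring_scope.

Definition elem_sym (R : comNzRingType) (n k : nat) (x : 'I_n -> R) : R :=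
  \sum_(S : {set 'I_n} | #|S| == k) \prod_(j in S) x j.

Definition csc (R : realType) (t : R) : R := (sin t)^-1.

(* Main.v *)
Require Import Defs.
From HB Require Import structures.
From mathcomp Require Import all_boot all_order all_algebra.
From mathcomp Require Import all_classical all_reals all_analysis.
From mathcomp Require Import ring lra zify.
Import Order.TTheory GRing.Theory Num.Theory.
Local Open Scope ring_scope.
Section S. Variable R : realType.
Definition G (i k : nat) : R :=
  ((i + k) * (i + 2 * k - 1)`! * 4 ^ k)%:R / (i`! * (2 * k)`!)%:R.

Lemma fact_neq0 m : (m`!)%:R != 0 :> R.
Proof. by rewrite pnatr_eq0 -lt0n fact_gt0. Qed.

Ltac nzt := repeat (apply/andP; split); rewrite ?fact_neq0 //; lra.

Lemma Ga m : G 0 m.+2 = 4 * G 0 m.+1.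
Proof.
rewrite /G !add0n !fact0 !mul1n.
have -> : (2 * m.+2 - 1 = (2 * m).+3)%N by lia.
have -> : (2 * m.+1 - 1 = (2 * m).+1)%N by lia.
have -> : (2 * m.+2 = (2 * m).+4)%N by lia.
have -> : (2 * m.+1 = (2 * m).+2)%N by lia.
rewrite !factS !natrM !natrX !exprS.
have h1 := ler0n R m. have h2 := fact_neq0 (2 * m).
field. nzt.
Qed.
Lemma Gb m : G 1 m.+2 = 2 * G 0 m.+2 + 4 * G 1 m.+1.
Proof.
rewrite /G !add0n !fact0 !mul1n.
have -> : (1 + 2 * m.+2 - 1 = (2 * m).+4)%N by lia.
have -> : (2 * m.+2 - 1 = (2 * m).+3)%N by lia.
have -> : (1 + 2 * m.+1 - 1 = (2 * m).+2)%N by lia.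
have -> : (2 * m.+2 = (2 * m).+4)%N by lia.
have -> : (2 * m.+1 = (2 * m).+2)%N by lia.
rewrite !factS !natrM !natrX !exprS.
have h1 := ler0n R m. have h2 := fact_neq0 (2 * m).
field. nzt.
Qed.

Lemma Gk0 j : G j.+1 0 = 1.
Proof.
rewrite /G !addn0 muln0 subn1 /= expn0 muln1 mulfV // -factS; exact: fact_neq0.
Qed.

Lemma Gd i k : G i.+2 k.+1 = 2 * G i.+1 k.+1 + 4 * G i.+2 k - G i k.+1.
Proof.
rewrite /G.
have -> : (i.+2 + 2 * k.+1 - 1 = (i + 2 * k).+3)%N by lia.
have -> : (i.+1 + 2 * k.+1 - 1 = (i + 2 * k).+2)%N by lia.
have -> : (i.+2 + 2 * k - 1 = (i + 2 * k).+1)%N by lia.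
have -> : (i + 2 * k.+1 - 1 = (i + 2 * k).+1)%N by lia.
have -> : (2 * k.+1 = (2 * k).+2)%N by lia.
rewrite !factS !natrM !natrX !exprS !natrD.
have h1 := ler0n R i. have h3 := ler0n R k.
have h2 := fact_neq0 (2 * k). have h4 := fact_neq0 i. have h5 := fact_neq0 (i + 2 * k).
field. nzt.
Qed.
Fixpoint Qp (n : nat) : {poly R} * {poly R} :=
  match n with 0%N => (1, 'X - 2%:P)
  | m.+1 => ((Qp m).2, 2%:P * ('X - 2%:P) * (Qp m).2 - 'X^2 * (Qp m).1) end.
Definition Q n := (Qp n).1.
Lemma Q0 : Q 0 = 1. Proof. by []. Qed.
Lemma Q1 : Q 1 = 'X - 2%:P. Proof. by []. Qed.
Lemma QS n : Q n.+2 = 2%:P * ('X - 2%:P) * Q n.+1 - 'X^2 * Q n. Proof. by []. Qed.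

Lemma coefQS n i : (Q n.+2)`_i =
  (if i is i'.+1 then 2 * (Q n.+1)`_i' else 0) - 4 * (Q n.+1)`_i
  - (if i is i'.+2 then (Q n)`_i' else 0).
Proof.
have -> : Q n.+2 = 2%:P * ('X * Q n.+1) - 4%:P * Q n.+1 - 'X^2 * Q n.
  rewrite QS (_ : 4%:P = 2%:P * 2%:P :> {poly R}); first ring.
  by rewrite -polyCM; congr (_%:P); ring.
rewrite !coefB !coefCM coefXM coefXnM.
case: i => [|[|i]] //=; rewrite ?mulr0 ?subr0 //.
by rewrite subn2.
Qed.

Definition cQ n i : R := if (i <= n)%N then (-1) ^+ (n - i) * G i (n - i) else 0.

Lemma Gval i k v w : ((i + k) * (i + 2 * k - 1)`! * 4 ^ k)%N = v ->
  (i`! * (2 * k)`!)%N = w -> G i k = v%:R / w%:R.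
Proof. by rewrite /G => -> ->. Qed.

Lemma cQ1 i : (Q 1)`_i = cQ 1 i.
Proof.
rewrite Q1 coefB coefX coefC /cQ.
case: i => [|[|i]] /=; rewrite ?subnn ?subn0 ?subSS.
- by rewrite (@Gval 0 1 4 2) //; field.
- by rewrite (@Gval 1 0 1 1) //; field.
- by rewrite subrr.
Qed.

Lemma cQ2 i : (Q 2)`_i = cQ 2 i.
Proof.
rewrite coefQS Q0.
case: i => [|[|[|i]]] /=; rewrite !cQ1 /cQ /= ?subnn ?subn0 ?subSS ?subnn ?subn0.
- by rewrite (@Gval 0 1 4 2) // (@Gval 0 2 192 24) //; field.
- rewrite (@Gval 0 1 4 2) // (@Gval 1 0 1 1) //.
  by rewrite (@Gval 1 1 16 2) //; field.
- by rewrite (@Gval 1 0 1 1) // (@Gval 2 0 2 2) // coefC /=; field.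
- by rewrite coefC /= !mulr0 !subr0.
Qed.
Lemma cQ_in n i k : n = (i + k)%N -> cQ n i = (-1) ^+ k * G i k.
Proof. move=> ->; rewrite /cQ leq_addr addKn //. Qed.
Lemma cQ_out n i : (n < i)%N -> cQ n i = 0.
Proof. by rewrite /cQ ltnNge => /negbTE ->. Qed.

Lemma coefQ_step n : (forall i, (Q n.+1)`_i = cQ n.+1 i) ->
  (forall i, (Q n.+2)`_i = cQ n.+2 i) -> forall i, (Q n.+3)`_i = cQ n.+3 i.
Proof.
move=> H1 H2 [|[|i]]; rewrite coefQS.
- rewrite H2 (@cQ_in n.+2 0 n.+2) // (@cQ_in n.+3 0 n.+3) // (Ga n.+1).
  rewrite [(-1) ^+ n.+3]exprS; ring.
- rewrite !H2 (@cQ_in n.+2 0 n.+2) // (@cQ_in n.+2 1 n.+1) //.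
  rewrite (@cQ_in n.+3 1 n.+2) // (Gb n).
  rewrite [(-1) ^+ n.+2]exprS; ring.
- rewrite !H2 H1.
  case: (leqP i n.+1) => hi; last first.
    rewrite !cQ_out //; try lia. by rewrite !mulr0 !subr0.
  have [k Hk] : exists k, n.+1 = (i + k)%N by exists (n.+1 - i)%N; lia.
  case: k Hk => [|k] Hk.
    rewrite addn0 in Hk; subst i.
    rewrite (@cQ_in n.+2 n.+2 0) ?addn0 // (@cQ_out n.+2 n.+3) //.
    rewrite (@cQ_in n.+1 n.+1 0) ?addn0 // (@cQ_in n.+3 n.+3 0) ?addn0 //.
    rewrite !Gk0 expr0; ring.
  have -> : n = (i + k)%N by lia.
  rewrite (@cQ_in _ i.+1 k.+1); last lia.
  rewrite (@cQ_in _ i.+2 k); last lia.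
  rewrite (@cQ_in _ i k.+1); last lia.
  rewrite (@cQ_in _ i.+2 k.+1); last lia.
  rewrite (Gd i k) [(-1) ^+ k.+1]exprS; ring.
Qed.

Lemma coefQ n : (0 < n)%N -> forall i, (Q n)`_i = cQ n i.
Proof.
case: n => // n _.
suff : (forall i, (Q n.+1)`_i = cQ n.+1 i) /\ (forall i, (Q n.+2)`_i = cQ n.+2 i) by case.
elim: n => [|n [IH1 IH2]]; first by split; [exact: cQ1 | exact: cQ2].
split => //; exact: coefQ_step.
Qed.
Lemma cos2n (t : R) : cos (t *+ 2) = 1 - 2 * sin t ^+ 2.
Proof. rewrite cos_mulr2n cos2sin2; ring. Qed.

Lemma Q_eval n (t : R) : sin t != 0 ->
  (Q n).[(sin t ^+ 2)^-1] = cos (n%:R * (t *+ 2)) / sin t ^+ (2 * n).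
Proof.
move=> hs.
set a := t *+ 2. set s := sin t.
suff : (Q n).[(s ^+ 2)^-1] = cos (n%:R * a) / s ^+ (2 * n) /\
       (Q n.+1).[(s ^+ 2)^-1] = cos (n.+1%:R * a) / s ^+ (2 * n.+1) by case.
elim: n => [|n [IH1 IH2]].
  rewrite Q0 Q1 !hornerE cos0 expr0 divr1 /a cos2n -/s; split => //.
  field; exact: hs.
split => //.
rewrite QS !hornerE IH1 IH2.
have e1 : cos (n.+2%:R * a) = 2 * cos a * cos (n.+1%:R * a) - cos (n%:R * a).
  have -> : n.+2%:R * a = n.+1%:R * a + a by ring.
  have -> : n%:R * a = n.+1%:R * a - a by ring.
  rewrite cosD cosB; ring.
rewrite e1 /a cos2n -/s.
have -> : (2 * n.+2 = 2 * n + 4)%N by lia.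
have -> : (2 * n.+1 = 2 * n + 2)%N by lia.
rewrite !exprD.
have hp : s ^+ (2 * n) != 0 by rewrite expf_neq0.
field. by rewrite hs expf_neq0.
Qed.
Definition th (n j : nat) : R := ((2 * j.+1 - 1)%N)%:R * pi / (4 * n)%:R.

Lemma th_eq n j : (0 < n)%N -> th n j = (2 * j%:R + 1) * pi / (4 * n%:R).
Proof.
move=> hn; rewrite /th.
have -> : (2 * j.+1 - 1 = 2 * j + 1)%N by lia.
by rewrite natrD natrM natrM.
Qed.

Lemma th_bounds n j : (j < n)%N -> 0 < th n j < pi / 2.
Proof.
move=> hj.
have hn : (0 < n)%N by lia.
rewrite th_eq //.
have hp := pi_gt0 R.
have hj' : (j.+1 <= n)%N := hj.
have hjn : j%:R + 1 <= n%:R :> R by rewrite natr1 ler_nat.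
have hj0 := ler0n R j.
have hn0 : 0 < n%:R :> R by rewrite ltr0n.
apply/andP; split.
  apply: divr_gt0; last lra.
  apply: mulr_gt0 => //; lra.
rewrite ltr_pdivrMr; last lra.
nra.
Qed.

Lemma sin_th_gt0 n j : (j < n)%N -> 0 < sin (th n j).
Proof. by move=> hj; apply: sin_gt0_pihalf; apply: th_bounds. Qed.

Lemma cos_odd j : cos (pi / 2 + j%:R * pi) = 0 :> R.
Proof.
elim: j => [|j IH]; first by rewrite mul0r addr0 cos_pihalf.
have -> : pi / 2 + j.+1%:R * pi = (pi / 2 + j%:R * pi) + pi :> R by ring.
by rewrite cosDpi IH oppr0.
Qed.

Lemma th_cos n j : (j < n)%N -> cos (n%:R * (th n j *+ 2)) = 0.
Proof.
move=> hj.
have hn : (0 < n)%N by lia.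
have hn0 : n%:R != 0 :> R by rewrite pnatr_eq0 -lt0n.
rewrite th_eq //.
have -> : n%:R * ((2 * j%:R + 1) * pi / (4 * n%:R) *+ 2) = pi / 2 + j%:R * pi :> R.
  rewrite mulr2n. field. exact: hn0.
exact: cos_odd.
Qed.

Lemma th_inj n i j : (i < n)%N -> (j < n)%N ->
  sin (th n i) ^+ 2 = sin (th n j) ^+ 2 -> i = j.
Proof.
move=> hi hj /eqP.
have hsi := @sin_th_gt0 n i hi. have hsj := @sin_th_gt0 n j hj.
rewrite eqrXn2 // ?ltW // => /eqP /sin_inj.
have hb := @th_bounds n i hi. have hb' := @th_bounds n j hj.
have hp := pi_gt0 R.
move=> /(_ _ _) e.
have : th n i = th n j.
  apply: e; rewrite in_itv /=; apply/andP; split; lra.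
have hn : (0 < n)%N by lia.
rewrite !th_eq //.
have hn0 : 0 < n%:R :> R by rewrite ltr0n.
move=> e2.
have : (2 * i%:R + 1) = (2 * j%:R + 1) :> R.
  have h4 : 4 * n%:R != 0 :> R by lra.
  have hp0 : pi != 0 :> R by lra.
  move: e2 => /(congr1 (fun x => x * (4 * n%:R) / pi)).
  by rewrite !divfK // !mulfK.
move=> e3.
have : i%:R = j%:R :> R by lra.
by move/eqP; rewrite eqr_nat => /eqP.
Qed.
End S.

Theorem mainTheorem7 (R : realType) (n k : nat) (hn : (0 < n)%N) (hk : (k <= n)%N) :
  @elem_sym R n k (fun j : 'I_n => csc (((2 * j.+1 - 1)%N)%:R * pi / (4 * n)%:R) ^+ 2)
  = (n * (n + k - 1)`! * 4 ^ k)%:R / ((n - k)`! * (2 * k)`!)%:R :> R.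
Proof.
pose f := fun j : nat => csc (((2 * j.+1 - 1)%N)%:R * pi / (4 * n)%:R) ^+ 2 :> R.
pose ps := mkseq f n.
have fE j : (j < n)%N -> f j = (sin (th R n j) ^+ 2)^-1.
  by move=> _; rewrite /f /csc exprVn.
have QE : Q R n = \poly_(i < n.+1) cQ R n i.
  apply/polyP => i; rewrite coef_poly coefQ // /cQ ltnS.
  by case: ifP.
have szQ : size (Q R n) = n.+1.
  rewrite QE size_poly_eq //= (@cQ_in R n n 0) ?addn0 // expr0 mul1r.
  case: n hn {hk f ps fE QE} => // n' _; rewrite Gk0; exact: oner_neq0.
have lcQ : lead_coef (Q R n) = 1.
  rewrite lead_coefE szQ /= coefQ // (@cQ_in R n n 0) ?addn0 // expr0 mul1r.
  by case: n hn {hk f ps fE QE szQ} => // n' _; rewrite Gk0.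
have rootsQ : all (root (Q R n)) ps.
  apply/allP => x /mapP [j]; rewrite mem_iota add0n => /andP [_ hj] ->.
  apply/rootP; rewrite fE // Q_eval; last by rewrite gt_eqF // sin_th_gt0.
  by rewrite th_cos // mul0r.
have uniqps : uniq_roots ps.
  rewrite uniq_rootsE map_inj_in_uniq ?iota_uniq //.
  move=> i j; rewrite !mem_iota !add0n => /andP [_ hi] /andP [_ hj].
  rewrite !fE // => /invr_inj; exact: th_inj.
have sps : size ps = n by rewrite size_mkseq.
have := all_roots_prod_XsubC (p := Q R n) (rs := ps).
rewrite szQ sps => /(_ erefl rootsQ uniqps).
rewrite lcQ scale1r => E.
have := congr1 (fun p : {poly R} => p`_(n - k)) E; rewrite /= {E}.
rewrite coef_prod_XsubC; last by rewrite sps leq_subr.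
rewrite coefQ // (@cQ_in R n (n - k) k); last by rewrite subnK.
move: (size ps) sps => m -> .
rewrite subKn //.
have hs : (-1) ^+ k != 0 :> R by rewrite expf_neq0 // oppr_eq0 oner_eq0.
move=> /(mulfI hs) e.
rewrite /elem_sym.
transitivity (\sum_(I in {set 'I_n} | #|I| == k) \prod_(i in I) ps`_i).
  apply: eq_bigr => I _; apply: eq_bigr => i _.
  by rewrite /ps nth_mkseq.
rewrite -e /G subnK //.
by have -> : (n - k + 2 * k - 1 = n + k - 1)%N by lia.
Qed.
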